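(* Consider the system $x_{k+1}=Ax_k+Bw_k$, $y^i_k=C^ix_k+D^iv^i_k$ for $i\in\mathcal V=\{1,\dots,N\}$, $k\in\mathbb Z_{\ge 0}$, with $x_0\in[\underline x_0,\overline x_0]$, $w_k\in[\underline w,\overline w]$ and $v^i_k\in[\underline v^i,\overline v^i]$ for all $k$ and $i$. Let agents communicate over a directed graph $G=(\mathcal V,E)$, and let the Distributed Interval Observer (DIO), described in the context, be run with arbitrary gains $L^i,\Gamma^i\in\mathbb R^{n\times m_i}$ ($i\in\mathcal V$) and an arbitrary number $d\in\mathbb N$ of network-update iterations. Then the DIO is a distributed interval framer for the system: for every admissible realization of $x_0$, $(w_k)$, $(v^i_k)$, every agent $i\in\mathcal V$ and every $k\ge 0$, $\underline x^i_k\le x_k\le \overline x^i_k$.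
   Context: All inequalities between vectors are entrywise; $\max$ and $\min$ of vectors are entrywise. For a matrix $M$, $M^+$ is defined entrywise by $M^+_{ij}=\max\{M_{ij},0\}$, and $M^-=M^+-M$. $A\in\mathbb R^{n\times n}$, $B\in\mathbb R^{n\times n_w}$, $C^i\in\mathbb R^{m_i\times n}$, $D^i\in\mathbb R^{m_i\times n_v^i}$, and the bounds $\underline x_0,\overline x_0,\underline w,\overline w$ are known to all agents; agent $i$ knows $\underline v^i,\overline v^i$ and observes only its own outputs $y^i_k$. For node $i$, $\mathcal N_i=\{j:(i,j)\in E\}\cup\{i\}$, and $\mathcal N_i^d$ is the set of nodes reachable from $i$ by a directed path of length at most $d$ (including $i$). DIO: set $T^i=I_n-\Gamma^iC^i$ and $\tilde A^i=T^iA-L^iC^i$. Initialize $\underline x^i_0=\underline x_0$, $\overline x^i_0=\overline x_0$ for all $i$. For each $k\ge0$, each agent $i$ computes $\underline x^{i,0}_{k+1}=(\tilde A^i)^+\underline x^i_k-(\tilde A^i)^-\overline x^i_k+(T^iB)^+\underline w-(T^iB)^-\overline w+L^iy^i_k+\Gamma^iy^i_{k+1}-((L^iD^i)^++(\Gamma^iD^i)^+)\overline v^i+((L^iD^i)^-+(\Gamma^iD^i)^-)\underline v^i$, $\overline x^{i,0}_{k+1}=(\tilde A^i)^+\overline x^i_k-(\tilde A^i)^-\underline x^i_k+(T^iB)^+\overline w-(T^iB)^-\underline w+L^iy^i_k+\Gamma^iy^i_{k+1}-((L^iD^i)^++(\Gamma^iD^i)^+)\underline v^i+((L^iD^i)^-+(\Gamma^iD^i)^-)\overline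 v^i$, and then performs $d$ rounds of network update $\underline x^{i,t}_{k+1}=\max_{j\in\mathcal N_i}\underline x^{j,t-1}_{k+1}$, $\overline x^{i,t}_{k+1}=\min_{j\in\mathcal N_i}\overline x^{j,t-1}_{k+1}$, $t=1,\dots,d$, setting $\underline x^i_{k+1}=\underline x^{i,d}_{k+1}=\max_{j\in\mathcal N_i^d}\underline x^{j,0}_{k+1}$ and $\overline x^i_{k+1}=\overline x^{i,d}_{k+1}=\min_{j\in\mathcal N_i^d}\overline x^{j,0}_{k+1}$. *)

(* Defs.v *)
From HB Require Import structures.
From mathcomp Require Import all_boot all_order all_algebra.
Set Implicit Arguments. Unset Strict Implicit. Unset Printing Implicit Defensive.
Import Order.TTheory GRing.Theory Num.Theory.
Local Open Scope ring_scope.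

Definition lemx (R : realFieldType) p q (M1 M2 : 'M[R]_(p, q)) : Prop :=
  forall a b, M1 a b <= M2 a b.

Definition pospart (R : realFieldType) p q (M : 'M[R]_(p, q)) : 'M[R]_(p, q) :=
  map_mx (fun a => Num.max a 0) M.
Definition negpart (R : realFieldType) p q (M : 'M[R]_(p, q)) : 'M[R]_(p, q) :=
  pospart M - M.

(* One round of network update: agent i takes the entrywise max (lower bound)
   / min (upper bound) over N_i = {j : (i,j) \in E} \cup {i}.
   Edge relation: e i j  <->  (i,j) \in E. *)
Definition net_round (R : realFieldType) (N : nat) (e : rel 'I_N) (n : nat)
  (X : 'I_N -> 'cV[R]_n * 'cV[R]_n) : 'I_N -> 'cV[R]_n * 'cV[R]_n :=
  fun i =>
    (\col_r \big[Num.max/ (X i).1 r 0]_(j | e i j) (X j).1 r 0,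
     \col_r \big[Num.min/ (X i).2 r 0]_(j | e i j) (X j).2 r 0).

(* Local (pre-network) step of agent i: from (lower, upper) bounds at time k,
   outputs y_k and y_{k+1}, produce (x^{i,0}_{k+1} lower, upper). *)
Definition local_step (R : realFieldType) (n nw m nv : nat)
  (A : 'M[R]_n) (B : 'M[R]_(n, nw)) (C : 'M[R]_(m, n)) (D : 'M[R]_(m, nv))
  (wl wu : 'cV[R]_nw) (vl vu : 'cV[R]_nv)
  (L Gam : 'M[R]_(n, m))
  (X : 'cV[R]_n * 'cV[R]_n) (yk yk1 : 'cV[R]_m) : 'cV[R]_n * 'cV[R]_n :=
  let T := 1%:M - Gam *m C in
  let At := T *m A - L *m C in
  let TB := T *m B in
  let LD := L *m D in
  let GD := Gam *m D in
  (pospart At *m X.1 - negpart At *m X.2 + pospart TB *m wl - negpart TB *m wu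
     + L *m yk + Gam *m yk1
     - (pospart LD + pospart GD) *m vu + (negpart LD + negpart GD) *m vl,
   pospart At *m X.2 - negpart At *m X.1 + pospart TB *m wu - negpart TB *m wl
     + L *m yk + Gam *m yk1
     - (pospart LD + pospart GD) *m vl + (negpart LD + negpart GD) *m vu).

(* The DIO: dio k i = (underline x^i_k, overline x^i_k). *)
Fixpoint dio (R : realFieldType) (N n nw : nat) (m nv : 'I_N -> nat)
  (e : rel 'I_N) (d : nat)
  (A : 'M[R]_n) (B : 'M[R]_(n, nw))
  (C : forall i, 'M[R]_(m i, n)) (D : forall i, 'M[R]_(m i, nv i))
  (xl0 xu0 : 'cV[R]_n) (wl wu : 'cV[R]_nw)
  (vl vu : forall i, 'cV[R]_(nv i))
  (L Gam : forall i, 'M[R]_(n, m i))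
  (y : forall i, nat -> 'cV[R]_(m i)) (k : nat) : 'I_N -> 'cV[R]_n * 'cV[R]_n :=
  match k with
  | 0 => fun _ => (xl0, xu0)
  | k'.+1 =>
      let prev := dio e d A B C D xl0 xu0 wl wu vl vu L Gam y k' in
      iter d (@net_round R N e n)
        (fun i => local_step A B (C i) (D i) wl wu (vl i) (vu i) (L i) (Gam i)
                    (prev i) (y i k') (y i k'.+1))
  end.

(* Main.v *)
Require Import Defs.
From HB Require Import structures.
From mathcomp Require Import all_boot all_order all_algebra.
From mathcomp Require Import lra.
Import Order.TTheory GRing.Theory Num.Theory.
Local Open Scope ring_scope.

Lemma term_bd (R : realFieldType) (c l x u : R) : l <= x -> x <= u ->
  Num.max c 0 * l - (Num.max c 0 - c) * u <= c * x /\
  c * x <= Num.max c 0 * u - (Num.max c 0 - c) * l.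
Proof.
move=> hl hu; case: ger0P => h; split; nra.
Qed.

Lemma mul_bd (R : realFieldType) p q r (M : 'M[R]_(p, q)) (xl x xu : 'M[R]_(q, r)) :
  lemx xl x -> lemx x xu ->
  lemx (pospart M *m xl - negpart M *m xu) (M *m x) /\
  lemx (M *m x) (pospart M *m xu - negpart M *m xl).
Proof.
move=> hl hu; split=> a b; rewrite !mxE -sumrB; apply: ler_sum => j _;
  rewrite !mxE; have [h1 h2] := (@term_bd _ (M a j) _ _ _ (hl j b) (hu j b)); done.
Qed.

Lemma bigmax_le (R : realFieldType) (I : finType) (P : pred I) (F : I -> R) x0 c :
  x0 <= c -> (forall j, P j -> F j <= c) -> \big[Num.max/x0]_(j | P j) F j <= c.
Proof.
move=> h0 hF; elim/big_ind: _ => //; move=> a b ha hb; by have [] := lerP a b.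
Qed.

Lemma bigmin_ge (R : realFieldType) (I : finType) (P : pred I) (F : I -> R) x0 c :
  c <= x0 -> (forall j, P j -> c <= F j) -> c <= \big[Num.min/x0]_(j | P j) F j.
Proof.
move=> h0 hF; elim/big_ind: _ => //; move=> a b ha hb; by have [] := lerP a b.
Qed.

Lemma net_ok (R : realFieldType) (N : nat) (e : rel 'I_N) (n : nat)
  (X : 'I_N -> 'cV[R]_n * 'cV[R]_n) (x : 'cV[R]_n) :
  (forall j, lemx (X j).1 x /\ lemx x (X j).2) ->
  forall j, lemx (net_round e X j).1 x /\ lemx x (net_round e X j).2.
Proof.
move=> H j; split=> a b; rewrite !mxE ord1.
- apply: bigmax_le; first by case: (H j) => h _; apply: h.
  by move=> k _; case: (H k) => h _; apply: h.
- apply: bigmin_ge; first by case: (H j) => _ h; apply: h.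
  by move=> k _; case: (H k) => _ h; apply: h.
Qed.

Lemma iter_ok (R : realFieldType) (N : nat) (e : rel 'I_N) (n d : nat)
  (X : 'I_N -> 'cV[R]_n * 'cV[R]_n) (x : 'cV[R]_n) :
  (forall j, lemx (X j).1 x /\ lemx x (X j).2) ->
  forall j, lemx (iter d (@net_round R N e n) X j).1 x /\
            lemx x (iter d (@net_round R N e n) X j).2.
Proof.
move=> H; elim: d => [|d IH] //=; exact: net_ok.
Qed.

Lemma entD (R : realFieldType) p q (M1 M2 : 'M[R]_(p, q)) a b :
  (M1 + M2) a b = M1 a b + M2 a b.
Proof. by rewrite mxE. Qed.
Lemma entN (R : realFieldType) p q (M1 : 'M[R]_(p, q)) a b :
  (- M1) a b = - M1 a b.
Proof. by rewrite mxE. Qed.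

Theorem lemma1 (R : realFieldType) (N n nw : nat) (m nv : 'I_N -> nat)
  (e : rel 'I_N) (d : nat)
  (A : 'M[R]_n) (B : 'M[R]_(n, nw))
  (C : forall i, 'M[R]_(m i, n)) (D : forall i, 'M[R]_(m i, nv i))
  (xl0 xu0 : 'cV[R]_n) (wl wu : 'cV[R]_nw)
  (vl vu : forall i, 'cV[R]_(nv i))
  (L Gam : forall i, 'M[R]_(n, m i))
  (x : nat -> 'cV[R]_n) (w : nat -> 'cV[R]_nw) (v : forall i, nat -> 'cV[R]_(nv i)) :
  (forall k, x k.+1 = A *m x k + B *m w k) ->
  lemx xl0 (x 0%N) -> lemx (x 0%N) xu0 ->
  (forall k, lemx wl (w k) /\ lemx (w k) wu) ->
  (forall i k, lemx (vl i) (v i k) /\ lemx (v i k) (vu i)) ->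
  let y := fun i k => C i *m x k + D i *m v i k in
  forall (i : 'I_N) (k : nat),
    lemx (dio e d A B C D xl0 xu0 wl wu vl vu L Gam y k i).1 (x k) /\
    lemx (x k) (dio e d A B C D xl0 xu0 wl wu vl vu L Gam y k i).2.
Proof.
move=> Hx H0l H0u Hw Hv y i k; elim: k i => [|k IH] i; first by split.
rewrite /=; apply: iter_ok => j.
set X := dio _ _ _ _ _ _ _ _ _ _ _ _ _ _ _ _ j.
have [hXl hXu] := IH j; rewrite -/X in hXl hXu.
rewrite /local_step /=.
set T := 1%:M - Gam j *m C j.
set At := T *m A - L j *m C j.
set TB := T *m B.
set LD := L j *m D j.
set GD := Gam j *m D j.
have [hwl hwu] := Hw k.
have [hvl hvu] := Hv j k.
have [hvl1 hvu1] := Hv j k.+1.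
have [h1l h1u] := @mul_bd _ _ _ _ At _ _ _ hXl hXu.
have [h2l h2u] := @mul_bd _ _ _ _ TB _ _ _ hwl hwu.
have [h3l h3u] := @mul_bd _ _ _ _ LD _ _ _ hvl hvu.
have [h4l h4u] := @mul_bd _ _ _ _ GD _ _ _ hvl1 hvu1.
have E : x k.+1 = At *m x k + TB *m w k + L j *m y j k + Gam j *m y j k.+1
                  - LD *m v j k - GD *m v j k.+1.
  have Tx : T *m A *m x k + T *m B *m w k = x k.+1 - Gam j *m C j *m x k.+1.
    by rewrite -!mulmxA -mulmxDr -Hx mulmxBl mul1mx mulmxA.
  rewrite /At /TB /LD /GD /y mulmxBl !mulmxDr !mulmxA.
  move: Tx; clearbody T.
  move: (T *m A *m x k) (T *m B *m w k) (Gam j *m C j *m x k.+1)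
        (L j *m C j *m x k) (L j *m D j *m v j k) (Gam j *m D j *m v j k.+1)
        (x k.+1) => p1 p2 p3 p4 p5 p6 p7 Tx.
  apply/matrixP => a b; move/matrixP: Tx => /(_ a b).
  rewrite !(entD, entN) => Tx; lra.
rewrite E !(mulmxDl (pospart LD)) !(mulmxDl (negpart LD)).
clearbody At TB LD GD.
move: (pospart At *m X.1) (negpart At *m X.2) (pospart At *m X.2) (negpart At *m X.1)
  (At *m x k) h1l h1u => a1 a2 a3 a4 a5 h1l h1u.
move: (pospart TB *m wl) (negpart TB *m wu) (pospart TB *m wu) (negpart TB *m wl)
  (TB *m w k) h2l h2u => b1 b2 b3 b4 b5 h2l h2u.
move: (pospart LD *m vl j) (negpart LD *m vu j) (pospart LD *m vu j) (negpart LD *m vl j)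
  (LD *m v j k) h3l h3u => c1 c2 c3 c4 c5 h3l h3u.
move: (pospart GD *m vl j) (negpart GD *m vu j) (pospart GD *m vu j) (negpart GD *m vl j)
  (GD *m v j k.+1) h4l h4u => d1 d2 d3 d4 d5 h4l h4u.
move: (L j *m y j k) (Gam j *m y j k.+1) => f1 f2.
split=> a b; move: (h1l a b) (h1u a b) (h2l a b) (h2u a b) (h3l a b) (h3u a b)
  (h4l a b) (h4u a b); rewrite !(entD, entN);
  move: (a1 a b) (a2 a b) (a3 a b) (a4 a b) (a5 a b) (b1 a b) (b2 a b) (b3 a b)
    (b4 a b) (b5 a b) (c1 a b) (c2 a b) (c3 a b) (c4 a b) (c5 a b) (d1 a b)
    (d2 a b) (d3 a b) (d4 a b) (d5 a b) (f1 a b) (f2 a b) => p0 p1 p2 p3 p4 p5 p6 p7 p8 p9 p10 p11 p12 p13 p14 p15 p16 p17 p18 p19 p20 p21 q1 q2 q3 q4 q5 q6 q7 q8. all: lra.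
Qed.
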